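(* Let $L$ be a subspace of $\bigwedge^kV$ and $1\leq i<j\leq n$. Then $N_{j\to i}L$ is monomial with respect to $e_j$, i.e. \[ N_{j\to i}L=\Big(N_{j\to i}L\cap\bigwedge^{k}V^{(j)}\Big)\oplus\Big(N_{j\to i}L\cap\big(e_{j}\wedge\bigwedge^{k-1}V^{(j)}\big)\Big). \]
   Context: $\mathbb{F}$ is a field (assumed throughout the paper, for expository purposes, to have characteristic not $2$), $V$ is an $n$-dimensional $\mathbb{F}$-vector space with a fixed basis $e_1,\dots,e_n$, and $\bigwedge V$ its exterior algebra. For $j\in[n]$, $V^{(j)}$ is the span of $\{e_h:h\neq j\}$, and $\bigwedge V^{(j)}$ is viewed as a subalgebra of $\bigwedge V$. Slow shift: for distinct $i,j\in[n]$ and nonzero $m\in\bigwedge^kV$, write uniquely $m=x+e_j\wedge y$ with $x\in\bigwedge^kV^{(j)}$, $y\in\bigwedge^{k-1}V^{(j)}$, and set $N_{j\to i}m=x+e_i\wedge y$ if this is nonzero, and $N_{j\to i}m=e_j\wedge y$ otherwise (the limit as $t\to0$ of the projective action of the linear map $e_j\mapsto e_i+te_j$ fixing the other $e_h$). For a subspace $L$ of $\bigwedge^kV$, $N_{j\to i}L$ is the span of $\{N_{j\to i}m:m\in L\setminus\{0\}\}$; it has the same dimension as $L$. *)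

(* Defs.v *)
From HB Require Import structures.
From mathcomp Require Import all_boot all_order all_algebra.
Set Implicit Arguments. Unset Strict Implicit. Unset Printing Implicit Defensive.
Import Order.TTheory GRing.Theory Num.Theory.
Local Open Scope ring_scope.

(* Exterior algebra  /\V  of V = F^n with basis e_0..e_{n-1} (indices 'I_n),
   represented by its coordinates in the standard basis e_S (S a subset of
   'I_n, e_S = e_{s_1} /\ ... /\ e_{s_r} with s_1 < ... < s_r). *)
Definition ext (F : fieldType) (n : nat) := {ffun {set 'I_n} -> F^o}.

Section Ext.
Variables (F : fieldType) (n : nat).

Definition eb (S : {set 'I_n}) : ext F n := [ffun T : {set 'I_n} => (T == S)%:R].

Definition sgn (i : 'I_n) (S : {set 'I_n}) : F :=
  (-1) ^+ #|[set t in S | (t < i)%N]|.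

(* left multiplication by e_i : m |-> e_i /\ m *)
Definition wedge_e (i : 'I_n) (m : ext F n) : ext F n :=
  [ffun T : {set 'I_n} => if i \in T then sgn i (T :\ i) * m (T :\ i) else 0].

Definition wedgek (k : nat) : {vspace ext F n} :=
  <<[seq eb X | X <- enum [pred X : {set 'I_n} | #|X| == k]]>>%VS.

Definition wedgek_off (k : nat) (j : 'I_n) : {vspace ext F n} :=
  <<[seq eb X | X <- enum [pred X : {set 'I_n} | (#|X| == k) && (j \notin X)]]>>%VS.

(* e_j /\ (/\^{k-1} V^(j))  (zero when k = 0) *)
Definition wedgek_on (k : nat) (j : 'I_n) : {vspace ext F n} :=
  <<[seq wedge_e j (eb X) |
     X <- enum [pred X : {set 'I_n} | (#|X|.+1 == k) && (j \notin X)]]>>%VS.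

(* decomposition m = x + e_j /\ y with x, y free of e_j *)
Definition xpart (j : 'I_n) (m : ext F n) : ext F n :=
  [ffun S : {set 'I_n} => if j \in S then 0 else m S].
Definition ypart (j : 'I_n) (m : ext F n) : ext F n :=
  [ffun S : {set 'I_n} => if j \in S then 0 else sgn j S * m (j |: S)].

Definition slow_shift (j i : 'I_n) (m : ext F n) : ext F n :=
  let x := xpart j m in let y := ypart j m in
  if x + wedge_e i y != 0 then x + wedge_e i y else wedge_e j y.

Definition in_shifted (j i : 'I_n) (L : {vspace ext F n}) (v : ext F n) : Prop :=
  exists s : seq (ext F n),
    (forall w, w \in s -> exists2 m, (m \in L) && (m != 0) & w = slow_shift j i m)
    /\ v \in <<s>>%VS.

End Ext.

(* Main.v *)
Require Import Defs.
From HB Require Import structures.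
From mathcomp Require Import all_boot all_order all_algebra.
Import Order.TTheory GRing.Theory Num.Theory.
Local Open Scope ring_scope.

Lemma span_zero_at (F : fieldType) (n : nat) (T : {set 'I_n})
  (s : seq (ext F n)) :
  (forall w, w \in s -> w T = 0) -> forall v, v \in <<s>>%VS -> v T = 0.
Proof.
move=> Hs v Hv.
have := coord_span (X := in_tuple s) Hv => ->.
rewrite sum_ffunE big1 // => l _.
rewrite ffunE.
have -> : (in_tuple s)`_l T = 0.
  apply: Hs; apply: mem_nth; exact: ltn_ord.
by rewrite scaler0.
Qed.

Lemma scal_reg (R : pzSemiRingType) (a : R) (b : R^o) : a *: b = a * b.
Proof. by []. Qed.

Lemma expand_eb (F : fieldType) (n : nat) (v : ext F n) (P : pred {set 'I_n}) :
  (forall T, ~~ P T -> v T = 0) -> v = \sum_(T | P T) v T *: eb F T.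
Proof.
move=> H; apply/ffunP => T; rewrite sum_ffunE.
transitivity (\sum_(S | P S) v S * (T == S)%:R); last first.
  by apply: eq_bigr => S _; rewrite !ffunE.
have [PT|nPT] := boolP (P T).
  rewrite (bigD1 T) //= eqxx mulr1 big1 ?addr0 // => S /andP[_ /negbTE].
  by rewrite eq_sym => ->; rewrite mulr0.
rewrite H // big1 // => S PS.
have /negbTE -> : T != S by apply: contraNneq nPT => ->.
by rewrite mulr0.
Qed.

Lemma in_span_of (F : fieldType) (n : nat) (g : {set 'I_n} -> ext F n)
  (P : pred {set 'I_n}) (c : {set 'I_n} -> F) (v : ext F n) :
  forall s : seq (ext F n), (forall T, P T -> g T \in s) ->
  v = \sum_(T | P T) c T *: g T -> v \in <<s>>%VS.
Proof.
move=> s Hs ->; apply: rpred_sum => T PT; apply: rpredZ; apply: memv_span.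
exact: Hs.
Qed.

Lemma wedge_eD (F : fieldType) (n : nat) (j : 'I_n) (a b : ext F n) :
  wedge_e j (a + b) = wedge_e j a + wedge_e j b.
Proof.
apply/ffunP => U; rewrite !ffunE; case: ifP => _; last by rewrite addr0.
by rewrite mulrDr.
Qed.

Lemma wedge_e0 (F : fieldType) (n : nat) (j : 'I_n) :
  wedge_e j (0 : ext F n) = 0.
Proof.
by apply/ffunP => U; rewrite !ffunE; case: ifP => _ //; rewrite mulr0.
Qed.

Lemma wedge_eZ (F : fieldType) (n : nat) (j : 'I_n) (c : F) (a : ext F n) :
  wedge_e j (c *: a) = c *: wedge_e j a.
Proof.
apply/ffunP => U; rewrite !ffunE; case: ifP => _.
  exact: mulrCA.
exact: (esym (mulr0 _)).
Qed.

Lemma wedge_e_sum (F : fieldType) (n : nat) (j : 'I_n) (P : pred {set 'I_n})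
  (c : {set 'I_n} -> F) :
  wedge_e j (\sum_(T | P T) c T *: eb F T) = \sum_(T | P T) c T *: wedge_e j (eb F T).
Proof.
rewrite (big_morph (wedge_e j) (@wedge_eD F n j) (@wedge_e0 F n j)).
by apply: eq_bigr => T _; rewrite wedge_eZ.
Qed.

Lemma sgn_sq (F : fieldType) (n : nat) (j : 'I_n) (S : {set 'I_n}) :
  sgn F j S * sgn F j S = 1.
Proof. by rewrite /sgn -exprMn mulrNN mulr1 expr1n. Qed.

Lemma decomp (F : fieldType) (n : nat) (j : 'I_n) (m : ext F n) :
  m = xpart j m + wedge_e j (ypart j m).
Proof.
apply/ffunP => T; rewrite !ffunE.
case: ifP => jT; last by rewrite addr0.
by rewrite add0r setD11 mulrA sgn_sq mul1r setD1K.
Qed.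

Lemma off_char (F : fieldType) (n k : nat) (j : 'I_n) (v : ext F n) :
  (forall T : {set 'I_n}, ~~ ((#|T| == k) && (j \notin T)) -> v T = 0) ->
  v \in wedgek_off F k j.
Proof.
move=> H; rewrite /wedgek_off; apply: (@in_span_of _ _ (fun X => eb F X) (fun X => (#|X| == k) && (j \notin X)) v).
  by move=> T PT; apply/mapP; exists T; rewrite ?mem_enum.
exact: (expand_eb _ _ _ _ H).
Qed.

Lemma on_char (F : fieldType) (n k : nat) (j : 'I_n) (v : ext F n) :
  (forall T : {set 'I_n}, ~~ ((j \in T) && (#|T| == k)) -> v T = 0) ->
  v \in wedgek_on F k j.
Proof.
move=> H.
have Hx : xpart j v = 0.
  apply/ffunP => T; rewrite !ffunE; case: ifP => jT //; apply: H; by rewrite jT.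
have Hy : forall X : {set 'I_n}, ~~ ((#|X|.+1 == k) && (j \notin X)) -> ypart j v X = 0.
  move=> X; rewrite ffunE; case: ifP => jX //= HX.
  rewrite H ?mulr0 //; rewrite setU11 /= cardsU1 jX /=.
  by rewrite /= andbT in HX.
rewrite (decomp _ _ j v) Hx add0r (expand_eb _ _ _ _ Hy) wedge_e_sum.
apply: (@in_span_of _ _ (fun X => wedge_e j (eb F X)) (fun X => (#|X|.+1 == k) && (j \notin X))) => //.
by move=> T PT; apply/mapP; exists T; rewrite ?mem_enum.
Qed.

Lemma wedgek_supp (F : fieldType) (n k : nat) (m : ext F n) :
  m \in wedgek F n k -> forall T : {set 'I_n}, #|T| != k -> m T = 0.
Proof.
move=> Hm T HT; apply: (span_zero_at _ _ T _ _ m Hm) => w /mapP [X].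
rewrite mem_enum => /eqP HX ->; rewrite ffunE.
have /negbTE -> : T != X by apply: contraNneq HT => ->; rewrite HX.
by [].
Qed.

Lemma shift_cases (F : fieldType) (n k : nat) (i j : 'I_n) (m : ext F n) :
  i != j -> m \in wedgek F n k ->
  slow_shift j i m \in wedgek_off F k j \/ slow_shift j i m \in wedgek_on F k j.
Proof.
move=> ij Hm; have Hs := wedgek_supp _ _ _ _ Hm.
rewrite /slow_shift; case: ifP => _; [left|right].
  apply: off_char => T HT; rewrite !ffunE.
  case: ifP => jT.
    case: ifP => iT; last by rewrite addr0.
    by rewrite in_setD1 jT andbT eq_sym ij /= mulr0 addr0.
  rewrite jT /= andbT in HT; rewrite Hs // add0r.
  case: ifP => iT //; rewrite in_setD1 jT andbF.
  rewrite Hs ?mulr0 // cardsU1 in_setD1 jT andbF /=.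
  by move: HT; rewrite (cardsD1 i T) iT.
apply: on_char => T HT; rewrite !ffunE.
case: ifP => jT //; rewrite ?ffunE setD11 setD1K // Hs ?mulr0 //.
by rewrite jT in HT.
Qed.

Theorem lemma3p3 (F : fieldType) (n k : nat) (L : {vspace ext F n})
    (i j : 'I_n) :
  (2%:R != 0 :> F) ->
  (L <= wedgek F n k)%VS ->
  (i < j)%N ->
  (forall v : ext F n,
     in_shifted j i L v <->
     exists a b : ext F n,
       [/\ in_shifted j i L a /\ a \in wedgek_off F k j,
           in_shifted j i L b /\ b \in wedgek_on F k j &
           v = a + b])
  /\ (forall v : ext F n,
        in_shifted j i L v -> v \in wedgek_off F k j -> v \in wedgek_on F k j ->
        v = 0).
Proof.
move=> _ HL ij.
have nij : i != j by rewrite neq_ltn ij.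
split.
  move=> v; split.
    case=> s [Hs Hv].
    pose p := fun w => w \in wedgek_off F k j.
    pose s1 := filter p s; pose s2 := filter (predC p) s.
    have Hsub : (<<s>> <= <<s1 ++ s2>>)%VS.
      apply/span_subvP => w ws; apply: memv_span.
      by rewrite mem_cat !mem_filter ws /=; case: (p w).
    move: (subvP Hsub v Hv); rewrite span_cat => /memv_addP [a Ha [b Hb ->]].
    exists a, b; split => //; split.
    - exists s1; split => // w; rewrite mem_filter => /andP [_ ws]; exact: Hs.
    - apply: (subvP _ a Ha); apply/span_subvP => w; by rewrite mem_filter => /andP [].
    - exists s2; split => // w; rewrite mem_filter => /andP [_ ws]; exact: Hs.
    - apply: (subvP _ b Hb); apply/span_subvP => w; rewrite mem_filter => /andP [pw ws].
      have [m /andP [Lm _] Ew] := Hs w ws; subst w.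
      have Hm : m \in wedgek F n k by exact: (subvP HL).
      case: (shift_cases _ _ _ _ _ _ nij Hm) => // H.
      by move: pw; rewrite /= /p H.
  case=> a [b [[[s1 [H1 Ha]] _] [[s2 [H2 Hb]] _] ->]].
  exists (s1 ++ s2); split.
    by move=> w; rewrite mem_cat => /orP [] ?; [apply: H1 | apply: H2].
  by rewrite span_cat; apply/memv_addP; exists a => //; exists b.
move=> v _ Hoff Hon; apply/ffunP => T; rewrite ffunE.
case jT: (j \in T).
  apply: (span_zero_at _ _ T _ _ v Hoff) => w /mapP [X].
  rewrite mem_enum => /andP [_ jX] ->; rewrite ffunE.
  have /negbTE -> : T != X by apply: contraNneq jX => <-; rewrite jT.
  by [].
apply: (span_zero_at _ _ T _ _ v Hon) => w /mapP [X] _ ->.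
by rewrite ffunE jT.
Qed.
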